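(* Assume [Existence] (see context). Let $\omega^*$ be a realization of some $P\in\mathcal{G}^{\delta^*,\theta^*}$ with $\delta^*\in I$, $\theta^*\in\mathcal{K}$, and let $\tilde\delta_n=\min_{\{x,y\}\subset\omega^*_{\Lambda_n},x\ne y}|x-y|$. Then the MLE of the hardcore parameter is $\hat\delta_n=\tilde\delta_n$ if $\tilde\delta_n\in I$ and $\hat\delta_n=\delta_{\max}$ otherwise; consequently $\hat\theta_n=\mathrm{argmin}_{\theta\in\mathcal{K}}K^{\hat\delta_n,\theta}_n(\omega^*_{\Lambda_n})$.
   Context: Setting: $I=[\delta_{\min},\delta_{\max}]$, $0\le\delta_{\min}\le\delta_{\max}\le\infty$; $\emptyset\ne\Theta\subset\mathbb{R}^p$; $\mathcal{K}\subset\Theta$ compact. Configurations are locally finite subsets of $\mathbb{R}^d$; $\omega_\Lambda=\omega\cap\Lambda$; $\pi_\Lambda$ is the unit-intensity Poisson process on bounded $\Lambda$; $\Lambda_n=[-n,n]^d$, $|\Lambda|$ Lebesgue measure; $\Omega_T$ is the set of tempered configurations $\{\omega:\exists t>0\ \forall n\ge1,\sum_{i\in\{-n,\dots,n-1\}^d}N_{i+[0,1]^d}(\omega)^2\le t(2n)^d\}$; $\Omega^\delta_\infty=\{\omega:\inf_{x\ne y\in\omega}|x-y|\ge\delta\}$. For each $\theta\in\Theta$, $(H^\theta_\Lambda)_\Lambda$ are finite-valued measurable energies on $\Omega_T$ satisfying $H^\theta_{\Lambda'}(\omega)=H^\theta_\Lambda(\omega)+\varphi_{\Lambda,\Lambda'}(\omega_{\Lambda^c})$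 for $\Lambda\subset\Lambda'$. Conditional densities $f^{\delta,\theta}_\Lambda(\omega)=e^{-H^\theta_\Lambda(\omega)}\mathbb{1}_{\Omega^\delta_\infty}(\omega)/Z^{\delta,\theta}_\Lambda(\omega_{\Lambda^c})$, with $Z^{\delta,\theta}_\Lambda(\omega_{\Lambda^c})=\int e^{-H^\theta_\Lambda(\omega'_\Lambda\cup\omega_{\Lambda^c})}\mathbb{1}_{\Omega^\delta_\infty}(\omega'_\Lambda\cup\omega_{\Lambda^c})\pi_\Lambda(d\omega'_\Lambda)$; $\mathcal{G}^{\delta,\theta}$ is the set of stationary probability measures $P$ with finite intensity, $P(\Omega^\delta_\infty\cap\Omega_T)=1$, satisfying the DLR equations $\int g\,dP=\iint g(\omega'_\Lambda\cup\omega_{\Lambda^c})f^{\delta,\theta}_\Lambda(\omega'_\Lambda\cup\omega_{\Lambda^c})\pi_\Lambda(d\omega'_\Lambda)P(d\omega)$. [Existence]: for all $\delta\in I,\theta\in\Theta$, bounded $\Lambda$ and $\omega\in\Omega^\delta_\infty\cap\Omega_T$, $Z^{\delta,\theta}_\Lambda(\omega_{\Lambda^c})<\infty$, and $\mathcal{G}^{\delta,\theta}\ne\emptyset$. Free-boundary partition function $Z^{\delta,\theta}_\Lambda=\int e^{-H^\theta_\Lambda(\omega_\Lambda)}\mathbb{1}_{\Omega^\delta_\infty}(\omega_\Lambda)\pi_\Lambda(d\omega_\Lambda)$. The MLE is $(\hat\delta_n,\hat\theta_n)=\mathrm{argmin}_{(\delta,\theta)\in I\times\mathcal{K}}K^{\delta,\theta}_n(\omega^*_{\Lambda_n})$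 (equivalently the argmax of the free-boundary likelihood $e^{-H^\theta_{\Lambda_n}(\omega^*_{\Lambda_n})}\mathbb{1}_{\Omega^\delta_\infty}(\omega^*_{\Lambda_n})/Z^{\delta,\theta}_{\Lambda_n}$), with contrast $K^{\delta,\theta}_n(\omega_{\Lambda_n})=\frac{\ln Z^{\delta,\theta}_{\Lambda_n}}{|\Lambda_n|}+\frac{H^\theta_{\Lambda_n}(\omega_{\Lambda_n})}{|\Lambda_n|}+\infty\cdot\mathbb{1}_{\tilde\delta_n(\omega_{\Lambda_n})<\delta}$. *)

(* Defs.v *)
From HB Require Import structures.
From mathcomp Require Import all_boot all_order all_algebra.
From mathcomp Require Import all_classical all_reals all_analysis.
From mathcomp Require Import measurable_realfun.
Set Implicit Arguments. Unset Strict Implicit. Unset Printing Implicit Defensive.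
Import Order.TTheory GRing.Theory Num.Theory.
Import numFieldNormedType.Exports.
Local Open Scope classical_set_scope.
Local Open Scope ring_scope.

Section GibbsDefs.
Variables (R : realType) (d : nat).

Definition pt := 'rV[R]_d.
Definition edist (x y : pt) : R := Num.sqrt (\sum_(i < d) (x ord0 i - y ord0 i) ^+ 2).

(* configurations: subsets of R^d (local finiteness follows a.s. from temperedness) *)
Definition conf := set pt.

Definition Lam (n : nat) : set pt :=
  [set x | forall i, - (n%:R) <= x ord0 i <= n%:R].
Definition volLam (n : nat) : R := ((2 * n)%:R) ^+ d.

Definition bounded_set (L : set pt) := exists n : nat, L `<=` Lam n.

Definition box (a b : pt) : set pt := [set x | forall i, a ord0 i <= x ord0 i <= b ord0 i].
Definition borel_d : set (set pt) := <<s [set B | exists a b, B = box a b] >>.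
Definition bounded_borel (L : set pt) := borel_d L /\ bounded_set L.

Definition Ncount (B : set pt) (w : conf) : \bar R := (\esum_(x in w `&` B) 1)%E.

Definition ucube (n : nat) (i : {ffun 'I_d -> 'I_(2 * n)}) : set pt :=
  [set x | forall j, ((i j)%:R - n%:R <= x ord0 j <= (i j)%:R - n%:R + 1)].

Definition tempered (w : conf) : Prop :=
  exists t : R, 0 < t /\ forall n : nat, (0 < n)%N ->
    (\sum_(i : {ffun 'I_d -> 'I_(2 * n)}) (Ncount (ucube i) w * Ncount (ucube i) w)
      <= (t * ((2 * n)%:R) ^+ d)%:E)%E.

Definition hardcore (delta : \bar R) (w : conf) : Prop :=
  forall x y, w x -> w y -> x <> y -> (delta <= (edist x y)%:E)%E.

(* iterated Lebesgue integral over the first k real coordinates of v : nat -> R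
   (the remaining coordinates being 0) *)
Definition upd (v : nat -> R) (k : nat) (t : R) : nat -> R :=
  fun j => if j == k then t else v j.
Fixpoint iint (k : nat) (f : (nat -> R) -> \bar R) : \bar R :=
  match k with
  | O => f (fun _ => 0)
  | k'.+1 => (\int[lebesgue_measure]_(t in [set: R]) iint k' (fun v => f (upd v k' t)))%E
  end.

Definition vol (L : set pt) : \bar R :=
  iint d (fun v => (\1_L (\row_(i < d) v i) : R)%:E).

(* the j-th point encoded in v *)
Definition pt_of (v : nat -> R) (j : nat) : pt := \row_(i < d) v (j * d + i)%N.
Definition pts_of (v : nat -> R) (m : nat) : conf :=
  [set x | exists2 j, (j < m)%N & x = pt_of v j].

(* integral of g : conf -> [0,+oo] against the unit-intensity Poisson process pi_L *)
Definition poisson_int (L : set pt) (g : conf -> \bar R) : \bar R :=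
  (expeR (- vol L) *
   \sum_(m <oo) (((m`!)%:R)^-1)%:E *
     iint (m * d) (fun v =>
        (\1_[set v | forall j, (j < m)%N -> L (pt_of v j)] v : R)%:E * g (pts_of v m)))%E.

Variables (p : nat) (H : 'rV[R]_p -> set pt -> conf -> R).

Definition Zbd (delta : \bar R) (th : 'rV[R]_p) (L : set pt) (w : conf) : \bar R :=
  poisson_int L (fun w' =>
    ((expR (- H th L (w' `|` (w `&` ~` L)))) *
     \1_(hardcore delta) (w' `|` (w `&` ~` L)))%:E).

Definition cdens (delta : \bar R) (th : 'rV[R]_p) (L : set pt) (w : conf) : \bar R :=
  ((expR (- H th L w) * \1_(hardcore delta) w) / fine (Zbd delta th L w))%:E.

Definition count_events : set (set conf) :=
  [set A | exists (a b : pt) (k : nat), A = [set w | Ncount (box a b) w = k%:R%:E]].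
Definition confM : Type := conf.
HB.instance Definition _ := Pointed.on confM.
HB.instance Definition _ := @isMeasurable.Build (sigma_display count_events)
  confM <<s count_events >> (@sigma_algebra0 _ setT count_events)
  (@sigma_algebraC _ count_events) (@sigma_algebra_bigcup _ setT count_events).

Definition shift (u : pt) (w : conf) : conf := [set x + u | x in w].

Definition gibbs (delta : \bar R) (th : 'rV[R]_p) (P : probability confM R) : Prop :=
  [/\ (forall u (A : set confM), measurable A -> P (shift u @^-1` A) = P A),
      (\int[P]_w Ncount (box (0%R : pt) (const_mx 1%R : pt)) w < +oo)%E,
      {ae P, forall w : confM, hardcore delta w /\ tempered w} &
      (forall L, bounded_borel L ->
        forall g : confM -> \bar R, measurable_fun [set: confM] g -> (forall w, 0 <= g w)%E ->
          \int[P]_w g w =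
          \int[P]_w poisson_int L (fun w' => g (w' `|` (w `&` ~` L)) *
                                            cdens delta th L (w' `|` (w `&` ~` L))))%E].

Definition Zfree (delta : \bar R) (th : 'rV[R]_p) (L : set pt) : \bar R :=
  poisson_int L (fun w => ((expR (- H th L w)) * \1_(hardcore delta) w)%:E).

(* minimal interpoint distance in w_{Lambda_n} (+oo if fewer than 2 points) *)
Definition dtilde (n : nat) (w : conf) : \bar R :=
  ereal_inf [set e | exists x y, [/\ (w `&` Lam n) x, (w `&` Lam n) y, x <> y &
                                       e = (edist x y)%:E]].

Definition contrast (n : nat) (delta : \bar R) (th : 'rV[R]_p) (w : conf) : \bar R :=
  (((ln (fine (Zfree delta th (Lam n))) + H th (Lam n) (w `&` Lam n)) / volLam n)%:E
   + (if `[< (dtilde n w < delta)%E >] then +oo else 0))%E.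

Definition dhat (dmin dmax : \bar R) (n : nat) (w : conf) : \bar R :=
  if `[< (dmin <= dtilde n w <= dmax)%E >] then dtilde n w else dmax.

End GibbsDefs.

(* Main.v *)
Require Import Defs.
From HB Require Import structures.
From mathcomp Require Import all_boot all_order all_algebra.
From mathcomp Require Import all_classical all_reals all_analysis.
From mathcomp Require Import measurable_realfun.
Import Order.TTheory GRing.Theory Num.Theory.
Import numFieldNormedType.Exports.
Local Open Scope classical_set_scope.
Local Open Scope ring_scope.
Local Open Scope ereal_scope.

Lemma int_mono (R : realType) (f1 f2 : R -> \bar R) :
  (forall x, 0 <= f1 x) -> (forall x, f1 x <= f2 x) ->
  \int[lebesgue_measure]_(t in [set: R]) f1 t <= \int[lebesgue_measure]_(t in [set: R]) f2 t.
Proof.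
move=> f10 f12.
have f20 x : 0 <= f2 x by apply: le_trans (f12 x).
rewrite ge0_integralTE // ge0_integralTE //.
apply: le_ereal_sup => _ [h /= hf <-]; exists h => //= x.
exact: le_trans (hf x) (f12 x).
Qed.

Lemma iint_mono (R : realType) k (f1 f2 : (nat -> R) -> \bar R) :
  (forall v, 0 <= f1 v) -> (forall v, f1 v <= f2 v) ->
  0 <= iint k f1 /\ iint k f1 <= iint k f2.
Proof.
elim: k f1 f2 => [|k IH] f1 f2 f10 f12 /=; first by split.
split.
  apply: integral_ge0 => t _.
  exact: (IH (fun v => f1 (upd v k t)) (fun v => f1 (upd v k t)) (fun v => f10 _) (fun v => le_refl _)).1.
apply: int_mono => t.
  exact: (IH (fun v => f1 (upd v k t)) (fun v => f1 (upd v k t)) (fun v => f10 _) (fun v => le_refl _)).1.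
exact: (IH (fun v => f1 (upd v k t)) (fun v => f2 (upd v k t)) (fun v => f10 _) (fun v => f12 _)).2.
Qed.

Lemma iint_ge0 (R : realType) k (f : (nat -> R) -> \bar R) :
  (forall v, 0 <= f v) -> 0 <= iint k f.
Proof. by move=> h; exact: (iint_mono _ k _ _ h (fun v => le_refl _)).1. Qed.

Definition ser {R : realType} {d : nat} (L : set (pt R d)) (g : conf R d -> \bar R) : \bar R :=
   \sum_(m <oo) (((m`!)%:R)^-1)%:E *
     iint (m * d) (fun v =>
        (\1_[set v | forall j, (j < m)%N -> L (pt_of d v j)] v : R)%:E * g (pts_of v m)).

Lemma pintE (R : realType) (d : nat) (L : set (pt R d)) g :
  poisson_int L g = expeR (- vol L) * ser L g.
Proof. by []. Qed.

Lemma ser_mono (R : realType) (d : nat) (L : set (pt R d)) g1 g2 :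
  (forall w, 0 <= g1 w) -> (forall w, g1 w <= g2 w) -> ser L g1 <= ser L g2.
Proof.
move=> g10 g12; apply: lee_nneseries => m.
  move=> _ _; apply: mule_ge0; first by rewrite lee_fin invr_ge0.
  apply: iint_ge0 => v.
  by apply: mule_ge0 => //; rewrite lee_fin indicE.
move=> _; apply: lee_wpmul2l; first by rewrite lee_fin invr_ge0.
apply: (iint_mono _ (m * d) _ _ _ _).2 => v.
  by apply: mule_ge0 => //; rewrite lee_fin indicE.
by apply: lee_wpmul2l => //; rewrite lee_fin indicE.
Qed.

Lemma ser_pos (R : realType) (d : nat) (L : set (pt R d)) g :
  (forall w, 0 <= g w) -> 0 < g (pts_of (fun _ => 0%R) 0) -> 0 < ser L g.
Proof.
move=> g0 gp; apply: (lt_le_trans _ (nneseries_lim_ge 1 _)).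
  rewrite big_nat1 /=.
  rewrite fact0 invr1 mul1e indicE mem_set ?mul1e //.
move=> m _ _; apply: mule_ge0; first by rewrite lee_fin invr_ge0.
apply: iint_ge0 => v.
by apply: mule_ge0 => //; rewrite lee_fin indicE.
Qed.

Lemma hc_mono (R : realType) (d : nat) (delta delta' : \bar R) (w : conf R d) :
  delta <= delta' -> hardcore delta' w -> hardcore delta w.
Proof. by move=> dd h x y wx wy xy; exact: le_trans dd (h x y wx wy xy). Qed.

Lemma key (R : realType) (d p : nat) (H : 'rV[R]_p -> set (pt R d) -> conf R d -> R)
  (delta delta' : \bar R) th (L : set (pt R d)) :
  delta <= delta' -> Zfree H delta th L < +oo ->
  (ln (fine (Zfree H delta' th L)) <= ln (fine (Zfree H delta th L)))%R.
Proof.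
move=> dd.
pose g (e : \bar R) := fun w : conf R d => ((expR (- H th L w)) * \1_(hardcore e) w)%:E.
have E e : Zfree H e th L = expeR (- vol L) * ser L (g e) by [].
have g0 e w : 0 <= g e w by rewrite lee_fin mulr_ge0 // ?expR_ge0 // indicE.
have S'S : ser L (g delta') <= ser L (g delta).
  apply: ser_mono => // w; rewrite lee_fin ler_wpM2l ?expR_ge0 // !indicE.
  case: (boolP (w \in (hardcore delta' : set (conf R d)))) => //= hw.
  by rewrite mem_set //; apply: hc_mono dd (set_mem hw).
have S'0 : 0 < ser L (g delta').
  apply: ser_pos => //; rewrite /g lte_fin mulr_gt0 ?expR_gt0 // indicE mem_set //.
  by move=> x y [j]; rewrite ltn0.
rewrite !E; move: (expeR_ge0 (- vol L)); move: (expeR (- vol L)) => A A0.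
move: S'S S'0; move: (ser L (g delta')) (ser L (g delta)) => S' S S'S S'0.
have S0 : 0 < S by apply: lt_le_trans S'S.
case: A A0 => [a| |] //; last by rewrite gt0_mulye.
rewrite lee_fin le_eqVlt => /orP[/eqP<-|a0]; first by rewrite !mul0e.
case: S S'S S0 => [s| |] //; last by rewrite gt0_muley ?lte_fin.
case: S' S'0 => [s'| |] // s'0 ss' s0 _.
rewrite -!EFinM /= ler_ln ?posrE ?mulr_gt0 // ler_wpM2l //; last by rewrite ltW.
Qed.
Local Close Scope ereal_scope.

Theorem lemma1 (R : realType) (d p : nat) (dmin dmax : \bar R)
  (Theta K : set 'rV[R]_p) (H : 'rV[R]_p -> set (pt R d) -> conf R d -> R)
  (dstar : \bar R) (thstar : 'rV[R]_p) (P : probability (confM R d) R) :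
  (* I = [dmin, dmax], 0 <= dmin <= dmax <= +oo *)
  (0 <= dmin)%E -> (dmin <= dmax)%E ->
  (* Theta nonempty, K compact subset of Theta *)
  Theta !=set0 -> K `<=` Theta -> compact K ->
  (* energies: measurable on Omega_T, and compatible *)
  (forall th L, Theta th -> bounded_borel L -> forall Y : set R, measurable Y ->
     measurable ([set w : confM R d | tempered w] `&` (H th L @^-1` Y))) ->
  (forall th L L', Theta th -> bounded_borel L -> bounded_borel L' -> L `<=` L' ->
     exists phi : conf R d -> R, forall w, tempered w ->
       H th L' w = H th L w + phi (w `&` ~` L)) ->
  (* [Existence] *)
  (forall delta th L w, (dmin <= delta <= dmax)%E -> Theta th -> bounded_borel L ->
     hardcore delta w -> tempered w -> (Zbd H delta th L w < +oo)%E) ->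
  (forall delta th, (dmin <= delta <= dmax)%E -> Theta th ->
     exists Q : probability (confM R d) R, gibbs H delta th Q) ->
  (* omega* is a realization of P in G^{dstar, thstar} *)
  (dmin <= dstar <= dmax)%E -> K thstar -> gibbs H dstar thstar P ->
  forall n : nat, (0 < n)%N ->
  {ae P, forall w : confM R d,
    let dh := dhat dmin dmax n w in
    [/\ (dmin <= dh <= dmax)%E,
        (forall delta th, (dmin <= delta <= dmax)%E -> K th ->
           (contrast H n dh th w <= contrast H n delta th w)%E) &
        (forall thh, K thh ->
           ((forall delta th, (dmin <= delta <= dmax)%E -> K th ->
               (contrast H n dh thh w <= contrast H n delta th w)%E)
            <-> (forall th, K th -> (contrast H n dh thh w <= contrast H n dh th w)%E)))]}.
Proof.
move=> dmin0 dminmax _ KT _ _ _ hZ _ _ _ _ n n0.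
have Lb : bounded_borel (@Lam R d n).
  split; last by exists n.
  apply: sub_sigma_algebra; exists (const_mx (- n%:R)%R), (const_mx n%:R).
  by apply/seteqP; split => x /= h i; by move: (h i); rewrite ?mxE.
have t0 : tempered (set0 : conf R d).
  exists 1%R; split => // m _.
  under eq_bigr => i _ do rewrite /Ncount set0I esum_set0 mule0.
  by rewrite big1_eq lee_fin mul1r exprn_ge0 // ler0n.
have hc0 e : hardcore e (set0 : conf R d) by move=> x y [].
have fin e th : (dmin <= e <= dmax)%E -> K th -> (Zfree H e th (@Lam R d n) < +oo)%E.
  move=> eI Kth.
  have -> : Zfree H e th (@Lam R d n) = Zbd H e th (@Lam R d n) set0.
    rewrite /Zbd /Zfree; congr poisson_int; apply: funext => w'.
    by rewrite set0I setU0.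
  exact: hZ eI (KT _ Kth) Lb (hc0 e) t0.
have v0 : (0 < @volLam R d n)%R by rewrite /volLam exprn_gt0 // ltr0n muln_gt0.
apply: aeW => w /=; set dh := dhat dmin dmax n w.
set dt := dtilde n w.
have dhI : (dmin <= dh <= dmax)%E.
  rewrite /dh /dhat; case: asboolP => // _; by rewrite dminmax lexx.
have C2 : forall delta th, (dmin <= delta <= dmax)%E -> K th ->
    (contrast H n dh th w <= contrast H n delta th w)%E.
  move=> delta th /andP[dI1 dI2] Kth; rewrite /contrast -/dt.
  case: (asboolP (dt < delta)%E) => hlt; first by rewrite addey ?leey.
  have [hd1 hd2] : (delta <= dh)%E /\ ~ (dt < dh)%E.
    move/negP: hlt; rewrite -leNgt => hlt.
    rewrite /dh /dhat -/dt; case: asboolP => hI.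
      by split => //; rewrite ltxx.
    split => //; apply/negP; rewrite -leNgt leNgt; apply/negP => h; apply: hI.
    by rewrite (le_trans dI1 hlt) ltW.
  rewrite (asboolF hd2) !adde0 lee_fin.
  apply: ler_wpM2r; first by rewrite invr_ge0 ltW.
  rewrite lerD2r.
  apply: (key _ _ _ H _ _ th _ hd1); apply: fin => //; by rewrite dI1 dI2.
split => // thh Kthh; split.
  by move=> h th Kth; apply: h.
by move=> h delta th dI Kth; apply: le_trans (h th Kth) (C2 _ _ dI Kth).
Qed.
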